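(* For all real $\alpha,\beta$ with $\beta\neq0$, all integers $n,m\ge0$ and every real $x$, \[ P_{n+m}^{(\alpha,\beta)}(x)=\sum_{j=0}^{n}\sum_{k=0}^{m}\binom{n}{j}\langle m-\beta k\rangle_{n-j}\,S_{\alpha,\beta}(m,k)\,x^kP_j^{(\alpha,\beta)}(x). \] In particular (case $m=1$), \[ P_{n+1}^{(\alpha,\beta)}(x)=-\sum_{j=0}^{n}\binom{n}{j}\Big(\alpha\,(n-j)!+\beta x\,\langle1-\beta\rangle_{n-j}\Big)P_j^{(\alpha,\beta)}(x). \]
   Context: For real $a$ and integer $n\ge 1$, $\langle a\rangle_n:=a(a+1)\cdots(a+n-1)$ and $\langle a\rangle_0:=1$. For real $\alpha,\beta$ and integers $0\le k\le n$, $S_{\alpha,\beta}(n,k):=\frac{1}{k!}\sum_{j=0}^{k}(-1)^{k-j}\binom{k}{j}\langle-\alpha-\beta j\rangle_n$. For real $\alpha,\beta$ with $\beta\neq0$, the polynomials $P_n^{(\alpha,\beta)}(x)$ are defined by $\sum_{n\ge0}P_n^{(\alpha,\beta)}(x)\frac{t^n}{n!}=(1-t)^{\alpha}\exp\big(x((1-t)^{\beta}-1)\big)$ (formal power series in $t$). *)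

(* Defs.v *)
From HB Require Import structures.
From mathcomp Require Import all_boot all_order all_algebra.
Set Implicit Arguments. Unset Strict Implicit. Unset Printing Implicit Defensive.
Import Order.TTheory GRing.Theory Num.Theory.
Local Open Scope ring_scope.

Section Defs.
Variable R : realFieldType.

Definition rising (a : R) (n : nat) : R := \prod_(i < n) (a + i%:R).

Definition Sab (al be : R) (n k : nat) : R :=
  (k`!%:R)^-1 * \sum_(j < k.+1)
     (-1) ^+ (k - j) * 'C(k, j)%:R * rising (- al - be * j%:R) n.

Definition fps := nat -> R.

Definition fps_one : fps := fun n => (n == 0%N)%:R.

Definition fps_mul (f g : fps) : fps :=
  fun n => \sum_(i < n.+1) f i * g (n - i)%N.

Definition fps_pow (f : fps) (k : nat) : fps := iter k (fps_mul f) fps_one.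

(* exp of a series f with f 0 = 0: exp f = sum_k f^k / k!;
   the coefficient of t^n only receives contributions from k <= n. *)
Definition fps_exp (f : fps) : fps :=
  fun n => \sum_(k < n.+1) fps_pow f k n / k`!%:R.

Definition gbinom (a : R) (n : nat) : R :=
  (\prod_(i < n) (a - i%:R)) / n`!%:R.

(* (1 - t)^a = sum_n binom(a,n) (-t)^n  (Newton's binomial series) *)
Definition fps_1mt_pow (a : R) : fps := fun n => (-1) ^+ n * gbinom a n.

Definition Pgen (al be x : R) : fps :=
  fps_mul (fps_1mt_pow al)
          (fps_exp (fun n => x * (fps_1mt_pow be n - fps_one n))).

Definition Pab (al be : R) (n : nat) (x : R) : R := n`!%:R * Pgen al be x n.

End Defs.

(* Main.v *)
Require Import Defs.
From HB Require Import structures.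
From mathcomp Require Import all_boot all_order all_algebra.
From mathcomp Require Import ring zify.
From Stdlib Require Import FunctionalExtensionality.
Import Order.TTheory GRing.Theory Num.Theory.
Local Open Scope ring_scope.

Section Work.
Variable R : realFieldType.
Implicit Types (a b c : nat -> R).

Definition conv a b : nat -> R :=
  fun n => \sum_(j < n.+1) 'C(n, j)%:R * a (n - j)%N * b j.
Definition sh a : nat -> R := fun n => a n.+1.

Lemma conv0 a b : conv a b 0 = a 0%N * b 0%N.
Proof. by rewrite /conv big_ord_recl big_ord0 addr0 /= mul1r. Qed.

Lemma convS a b n : conv a b n.+1 = conv (sh a) b n + conv a (sh b) n.
Proof.
rewrite /conv big_ord_recl /= bin0 subn0 mul1r.
under eq_bigr => i _ do
  rewrite binS subSS natrD mulrDl mulrDl.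
rewrite big_split /= addrA; congr (_ + _).
rewrite big_ord_recr /= bin_small // mul0r mul0r addr0.
rewrite [in RHS]big_ord_recl /= bin0 subn0 mul1r; congr (_ + _).
apply: eq_bigr => i _; rewrite /sh subnSK //.
Qed.

Lemma conv_extl a a' b n : (forall i, (i <= n)%N -> a i = a' i) ->
  conv a b n = conv a' b n.
Proof.
by move=> H; apply: eq_bigr => i _; rewrite H // leq_subr.
Qed.

Lemma convDl a a' b n : conv (fun i => a i + a' i) b n = conv a b n + conv a' b n.
Proof.
rewrite /conv -big_split /=; apply: eq_bigr => i _; ring.
Qed.

Lemma convZl (k : R) a b n : conv (fun i => k * a i) b n = k * conv a b n.
Proof.
rewrite /conv mulr_sumr; apply: eq_bigr => i _; ring.
Qed.

Lemma conv_suml (N : nat) (f : nat -> nat -> R) b n :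
  conv (fun i => \sum_(k < N) f k i) b n = \sum_(k < N) conv (f k) b n.
Proof.
rewrite /conv; under eq_bigr do rewrite mulr_sumr mulr_suml.
rewrite exchange_big /=; apply: eq_bigr => k _; apply: eq_bigr => i _; ring.
Qed.

Lemma sh_conv a b : sh (conv a b) = fun i => conv (sh a) b i + conv a (sh b) i.
Proof. by apply: functional_extensionality => i; rewrite /sh convS. Qed.

Lemma convC a b n : conv a b n = conv b a n.
Proof.
elim: n a b => [|n IH] a b; first by rewrite !conv0 mulrC.
by rewrite !convS IH [conv a _ _]IH addrC.
Qed.

Lemma convDr a b b' n : conv a (fun i => b i + b' i) n = conv a b n + conv a b' n.
Proof. by rewrite convC convDl !(convC _ a). Qed.

Lemma convZr (k : R) a b n : conv a (fun i => k * b i) n = k * conv a b n.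
Proof. by rewrite convC convZl convC. Qed.

Lemma conv_extr a b b' n : (forall i, (i <= n)%N -> b i = b' i) ->
  conv a b n = conv a b' n.
Proof. by move=> H; rewrite convC (conv_extl _ _ _ _ H) convC. Qed.

Lemma convA a b c n : conv (conv a b) c n = conv a (conv b c) n.
Proof.
elim: n a b c => [|n IH] a b c; first by rewrite !conv0 mulrA.
rewrite !convS !sh_conv convDl convDr !IH -addrA.
congr (_ + _); rewrite convS addrA; congr (_ + _).
Qed.

Lemma rising_0 (s : R) : rising s 0 = 1.
Proof. by rewrite /rising big_ord0. Qed.

Lemma risingS (a : R) n : rising a n.+1 = a * rising (a + 1) n.
Proof.
rewrite /rising big_ord_recl /= addr0; congr (_ * _).
apply: eq_bigr => i _; rewrite /bump /= natrD; ring.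
Qed.

Lemma risingSr (a : R) n : rising a n.+1 = rising a n * (a + n%:R).
Proof. by rewrite /rising big_ord_recr. Qed.

Lemma sh_rising (a : R) : sh (rising a) = fun i => a * rising (a + 1) i.
Proof. by apply: functional_extensionality => i; rewrite /sh risingS. Qed.

Lemma rising0 n : rising (0 : R) n = (n == 0)%:R.
Proof. by case: n => [|n]; rewrite ?rising_0 // risingS mul0r. Qed.

Lemma rising1 n : rising (1 : R) n = n`!%:R.
Proof.
elim: n => [|n IH]; first by rewrite rising_0.
by rewrite risingSr IH factS natrM mulrC -natr1 addrC.
Qed.

Lemma vandermonde (a b : R) n : conv (rising a) (rising b) n = rising (a + b) n.
Proof.
elim: n a b => [|n IH] a b; first by rewrite conv0 !rising_0 mulr1.
rewrite convS !sh_rising convZl convZr !IH risingS.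
have -> : a + 1 + b = a + b + 1 by ring.
have -> : a + (b + 1) = a + b + 1 by ring.
ring.
Qed.

Lemma conv_delta a n : conv (rising 0) a n = a n.
Proof.
elim: n a => [|n IH] a; first by rewrite conv0 rising_0 mul1r.
rewrite convS sh_rising convZl mul0r add0r IH //.
Qed.

Definition egf (f : nat -> R) : nat -> R := fun n => n`!%:R * f n.

Lemma fact_neq0 n : (n`!%:R : R) != 0.
Proof. by rewrite pnatr_eq0 -lt0n fact_gt0. Qed.

Lemma egf_mul f g n : egf (fps_mul f g) n = conv (egf g) (egf f) n.
Proof.
rewrite /egf /fps_mul /conv mulr_sumr; apply: eq_bigr => i _.
have hi : (i <= n)%N by rewrite -ltnS.
rewrite -(bin_fact hi) !natrM; ring.
Qed.

Lemma egf_one n : egf (@fps_one R) n = rising 0 n.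
Proof. by rewrite rising0 /egf /fps_one; case: n => [|n] /=; rewrite ?mul1r ?mulr0. Qed.

Lemma prod_neg (c : R) n :
  \prod_(i < n) (- c + i%:R) = (-1) ^+ n * \prod_(i < n) (c - i%:R).
Proof.
elim: n => [|n IH]; first by rewrite !big_ord0 mulr1.
by rewrite !big_ord_recr /= IH exprS; ring.
Qed.

Lemma egf_1mt (c : R) n : egf (fps_1mt_pow c) n = rising (- c) n.
Proof.
rewrite /egf /fps_1mt_pow /gbinom /rising prod_neg.
by field; exact: fact_neq0.
Qed.

Definition Gp (F : nat -> R) (k : nat) : nat -> R :=
  iter k (fun g => conv g F) (rising 0).

Lemma egf_pow f k n : egf (fps_pow f k) n = Gp (egf f) k n.
Proof.
elim: k n => [|k IH] n; first by rewrite egf_one.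
rewrite /= egf_mul; apply: conv_extl => i _; exact: IH.
Qed.

Lemma Gp_vanish F k n : F 0%N = 0 -> (n < k)%N -> Gp F k n = 0.
Proof.
move=> F0; elim: k n => [|k IH] n //= hn.
rewrite /conv big1 // => j _.
move: (ltn_ord j); case: (nat_of_ord j) => [|j'] hj; first by rewrite F0 mulr0.
rewrite IH ?mulr0 ?mul0r //; move: hn hj; clear; lia.
Qed.

Lemma sh_Gp F k n : Gp F k.+1 n.+1 = k.+1%:R * conv (Gp F k) (sh F) n.
Proof.
elim: k n => [|k IH] n.
  by rewrite /= convS conv_delta sh_rising convZl mul0r add0r mul1r.
rewrite [Gp F k.+2]/= convS.
rewrite (conv_extl _ (fun i => k.+1%:R * conv (Gp F k) (sh F) i)); last first.
  by move=> i _; exact: IH.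
rewrite convZl convA (conv_extr (Gp F k) (conv (sh F) F) (conv F (sh F)) n); last first.
  by move=> i _; rewrite convC.
rewrite -convA.
have -> : conv (conv (Gp F k) F) (sh F) n = conv (Gp F k.+1) (sh F) n by [].
rewrite -[(k.+2)%:R]natr1; ring.
Qed.

Definition Ex (F : nat -> R) : nat -> R :=
  fun n => \sum_(k < n.+1) Gp F k n / k`!%:R.

Lemma Ex_wide F n N : F 0%N = 0 -> (n <= N)%N ->
  Ex F n = \sum_(k < N.+1) Gp F k n / k`!%:R.
Proof.
move=> F0 hN; rewrite /Ex (big_ord_widen _ (fun k => Gp F k n / k`!%:R) (_ : n.+1 <= N.+1)%N) //.
rewrite [RHS](bigID (fun k : 'I__ => (k < n.+1)%N)) /= [X in _ = _ + X]big1 ?addr0 //.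
by move=> k; rewrite -leqNgt => hk; rewrite Gp_vanish ?mul0r.
Qed.

Lemma sh_Ex F n : F 0%N = 0 -> Ex F n.+1 = conv (Ex F) (sh F) n.
Proof.
move=> F0; rewrite /Ex big_ord_recl.
have -> : Gp F 0 n.+1 = 0 by rewrite /= rising0.
rewrite mul0r add0r.
have bump0 : forall k, bump 0 k = k.+1 by [].
under eq_bigr => k _ do rewrite lift0 sh_Gp factS natrM invfM.
rewrite (conv_extl _ (fun i => \sum_(k < n.+1) Gp F k i / k`!%:R)); last first.
  by move=> i hi; exact: (Ex_wide _ _ _ F0 hi).
rewrite (conv_suml _ (fun k i => Gp F k i / k`!%:R)); apply: eq_bigr => k _.
rewrite [RHS](conv_extl _ (fun i => k`!%:R^-1 * Gp F k i)); last by move=> i _; rewrite mulrC.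
rewrite convZl; field; rewrite fact_neq0 /= addrC natr1 pnatr_eq0 //.
Qed.

Section P.
Variables (al be x : R).
Definition Fx : nat -> R := fun n => x * (rising (- be) n - rising 0 n).
Definition Pc : nat -> R := conv (Ex Fx) (rising (- al)).

Lemma Fx0 : Fx 0%N = 0.
Proof. by rewrite /Fx !rising_0 subrr mulr0. Qed.

Lemma Pab_conv n : Pab al be n x = Pc n.
Proof.
have hF : egf (fun n => x * (fps_1mt_pow be n - @fps_one R n)) = Fx.
  apply: functional_extensionality => i.
  by rewrite /Fx -egf_1mt -egf_one /egf; ring.
rewrite /Pab /Pgen -/(egf _ n) egf_mul /Pc.
rewrite (conv_extr _ _ (rising (- al))); last by move=> i _; rewrite egf_1mt.
apply: conv_extl => i _.
rewrite /egf /fps_exp /Ex mulr_sumr; apply: eq_bigr => k _.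
by rewrite mulrA -/(egf _ i) egf_pow hF.
Qed.

Lemma P1 n : Pc n.+1 =
  conv Pc (fun i => x * (- be) * rising (1 - be) i) n + (- al) * conv Pc (rising 1) n.
Proof.
rewrite /Pc convS (conv_extl _ (conv (Ex Fx) (sh Fx))); last first.
  by move=> i _; rewrite /sh sh_Ex // Fx0.
rewrite convA (conv_extr _ _ (conv (rising (- al)) (sh Fx))); last first.
  by move=> i _; rewrite convC.
rewrite -convA -/Pc; congr (_ + _).
  apply: conv_extr => i _; rewrite /sh /Fx !risingS mul0r subr0 addrC; ring.
rewrite sh_rising convZr; congr (_ * _).
rewrite (conv_extr _ _ (conv (rising (- al)) (rising 1))); last first.
  by move=> i _; rewrite vandermonde.
by rewrite -convA.
Qed.
End P.

Section S.
Variables (al be : R).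
Definition T (k m : nat) : R :=
  \sum_(j < k.+1) (-1) ^+ (k - j) * 'C(k, j)%:R * rising (- al - be * j%:R) m.

Lemma SabT m k : Sab al be m k = k`!%:R^-1 * T k m.
Proof. by []. Qed.

Lemma binrel k j : (j <= k)%N -> ((k.+1 - j) * 'C(k.+1, j) = k.+1 * 'C(k, j))%N.
Proof.
move=> hj; rewrite -mul_bin_left.
by have := mul_bin_diag k.+1 j => /= ->.
Qed.

Lemma T_rec k m : T k.+1 m.+1 =
  (m%:R - be * k.+1%:R - al) * T k.+1 m - be * k.+1%:R * T k m.
Proof.
have -> : T k m = \sum_(j < k.+2) (-1) ^+ (k - j) * 'C(k, j)%:R * rising (- al - be * j%:R) m.
  by rewrite [in RHS]big_ord_recr /= bin_small // mulr0 mul0r addr0.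
rewrite /T !mulr_sumr -sumrB; apply: eq_bigr => j _.
have hj := ltn_ord j; rewrite risingSr.
case: (ltnP j k.+1) => hjk.
  rewrite subSn // exprS.
  have h : (k.+1%:R - j%:R) * 'C(k.+1, j)%:R = k.+1%:R * 'C(k, j)%:R :> R.
    by rewrite -natrB 1?ltnW // -!natrM binrel.
  apply/eqP; rewrite -subr_eq0; apply/eqP.
  transitivity (- (be * (-1) ^+ (k - j) * rising (- al - be * j%:R) m *
     ((k.+1%:R - j%:R) * 'C(k.+1, j)%:R - k.+1%:R * 'C(k, j)%:R))); first ring.
  by rewrite h subrr mulr0 oppr0.
have hje : nat_of_ord j = k.+1 by apply/eqP; rewrite eqn_leq hjk -ltnS hj.
rewrite hje subnn (bin_small (ltnSn k)) binn; ring.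
Qed.

Lemma Sab_rec m k : Sab al be m.+1 k.+1 =
  (m%:R - be * k.+1%:R - al) * Sab al be m k.+1 - be * Sab al be m k.
Proof.
rewrite !SabT T_rec factS natrM.
field; rewrite fact_neq0 /= addrC natr1 pnatr_eq0 //.
Qed.

Lemma Sab_rec0 m : Sab al be m.+1 0 = (m%:R - al) * Sab al be m 0.
Proof.
rewrite !SabT /T !big_ord1 /= risingSr; ring.
Qed.

Lemma Sab_vanish m k : (m < k)%N -> Sab al be m k = 0.
Proof.
elim: m k => [|m IH] [|k] //= hk.
  rewrite SabT /T.
  have -> : \sum_(j < k.+2) (-1) ^+ (k.+1 - j) * 'C(k.+1, j)%:R * rising (- al - be * j%:R) 0
      = ((-1) + 1) ^+ k.+1 :> R.
    rewrite exprDn; apply: eq_bigr => j _; rewrite rising_0 expr1n mulr1 mulr_natr mulr1 //.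
  by rewrite addNr expr0n mulr0.
by rewrite (Sab_rec m k) !IH ?mulr0 ?subrr // ltnW.
Qed.
End S.

Lemma comb m (S0 S1 W : nat -> R) (al be x : R) :
  S1 0%N = (m%:R - al) * S0 0%N ->
  (forall k, S1 k.+1 = (m%:R - be * k.+1%:R - al) * S0 k.+1 - be * S0 k) ->
  S0 m.+1 = 0 ->
  \sum_(k < m.+1) S0 k * x ^+ k * ((m%:R - be * k%:R - al) * W k + x * (- be) * W k.+1)
  = \sum_(k < m.+2) S1 k * x ^+ k * W k.
Proof.
move=> h0 hS hm.
pose A k := S0 k * x ^+ k * (m%:R - be * k%:R - al) * W k.
pose B k := S0 k * x ^+ k.+1 * W k.+1.
have -> : \sum_(k < m.+1) S0 k * x ^+ k * ((m%:R - be * k%:R - al) * W k + x * (- be) * W k.+1)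
   = \sum_(k < m.+1) A k - be * \sum_(k < m.+1) B k.
  rewrite mulr_sumr -sumrB; apply: eq_bigr => k _; rewrite /A /B exprS; ring.
have -> : \sum_(k < m.+1) A k = \sum_(k < m.+2) A k.
  by rewrite [in RHS]big_ord_recr /= /A hm !mul0r addr0.
rewrite big_ord_recl [in RHS]big_ord_recl mulr_sumr -addrA -sumrB; congr (_ + _).
  by rewrite /A h0 expr0 mulr0 subr0; ring.
apply: eq_bigr => k _; rewrite lift0 hS /A /B; ring.
Qed.

Section Main.
Variables (al be x : R).
Definition V (k m : nat) : nat -> R := rising (m%:R - be * k%:R).

Lemma shV k m : sh (V k m) = fun i => (m%:R - be * k%:R) * V k m.+1 i.
Proof.
apply: functional_extensionality => i; rewrite /sh /V risingS.
by rewrite -[(m.+1)%:R]natr1 addrAC.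
Qed.

Lemma V_rho1 k m i : conv (V k m) (rising 1) i = V k m.+1 i.
Proof. by rewrite /V vandermonde -[(m.+1)%:R]natr1 addrAC. Qed.

Lemma V_g k m i : conv (V k m) (fun j => x * (- be) * rising (1 - be) j) i =
  x * (- be) * V k.+1 m.+1 i.
Proof.
rewrite convZr /V vandermonde; congr (_ * rising _ _).
rewrite -[(m.+1)%:R]natr1 -[(k.+1)%:R]natr1; ring.
Qed.

Lemma claim m n : Pc al be x (n + m)%N =
  \sum_(k < m.+1) Sab al be m k * x ^+ k * conv (V k m) (Pc al be x) n.
Proof.
elim: m n => [|m IH] n.
  rewrite big_ord1 addn0 /V.
  have -> : (0%:R - be * 0%:R) = 0 :> R by ring.
  rewrite conv_delta /Sab big_ord1 /= rising_0 expr0 invr1 subnn expr0 bin0 ?mulr1n ?mul1r ?mulr1 //.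
rewrite addnS -addSn IH.
have hP : sh (Pc al be x) = fun i => conv (Pc al be x) (fun j => x * (- be) * rising (1 - be) j) i
      + (- al) * conv (Pc al be x) (rising 1) i.
  by apply: functional_extensionality => i; rewrite /sh P1.
rewrite -(comb m _ _ (fun k => conv (V k m.+1) (Pc al be x) n) al be x (Sab_rec0 al be m)
   (Sab_rec al be m) (Sab_vanish al be _ _ (ltnSn m))).
apply: eq_bigr => k _; congr (_ * _).
rewrite convS shV convZl hP convDr convZr.
rewrite (conv_extr (V k m) _ (conv (fun j => x * (- be) * rising (1 - be) j) (Pc al be x))); last first.
  by move=> i _; rewrite convC.
rewrite (conv_extr (V k m) (conv (Pc al be x) (rising 1)) (conv (rising 1) (Pc al be x))); last first.
  by move=> i _; rewrite convC.
rewrite -!(convA (V k m) _ (Pc al be x)).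
rewrite (conv_extl (conv (V k m) (fun j => x * (- be) * rising (1 - be) j)) (fun i => x * (- be) * V k.+1 m.+1 i)); last by move=> i _; rewrite V_g.
rewrite (conv_extl (conv (V k m) (rising 1)) (V k m.+1)); last by move=> i _; rewrite V_rho1.
rewrite convZl; ring.
Qed.
End Main.
End Work.

Theorem mainTheorem12 (R : realFieldType) (al be : R) (hbe : be != 0) :
  (forall (n m : nat) (x : R),
     Pab al be (n + m) x =
     \sum_(j < n.+1) \sum_(k < m.+1)
        'C(n, j)%:R * rising (m%:R - be * k%:R) (n - j)
        * Sab al be m k * x ^+ k * Pab al be j x)
  /\
  (forall (n : nat) (x : R),
     Pab al be n.+1 x =
     - \sum_(j < n.+1)
        'C(n, j)%:R * (al * (n - j)`!%:R + be * x * rising (1 - be) (n - j))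
        * Pab al be j x).
Proof.
split.
  move=> n m x; rewrite Pab_conv (claim _ al be x m n) exchange_big /=.
  apply: eq_bigr => k _; rewrite /conv mulr_sumr; apply: eq_bigr => j _.
  rewrite Pab_conv /V; ring.
move=> n x; rewrite Pab_conv P1 convC (convC _ _ (rising 1)) /conv mulr_sumr -big_split /=.
rewrite -sumrN; apply: eq_bigr => j _; rewrite Pab_conv rising1 addrC; ring.
Qed.
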